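(* Let $q$ be an odd prime power, $d\ge 2$ an even integer, and $A\subset\mathbb F_q^d$. Let $\mathcal{SQ}(A)$ be the number of pairs $(x,y)\in A\times A$ such that $\eta(\|x-y\|)=1$. Then $$\mathcal{SQ}(A)\le \frac{|A|^2}{2}+\frac{q^{\frac d2}}{2}|A|-\frac{|A|^2}{2q^{\frac d2}}-\frac{|A|}{2}.$$
   Context: For $x,y\in\mathbb F_q^d$, $\|x-y\|:=(x_1-y_1)^2+\cdots+(x_d-y_d)^2\in\mathbb F_q$. $\eta$ denotes the quadratic character of $\mathbb F_q$ with the convention $\eta(0)=0$. *)

(* Defs.v *)
From mathcomp Require Import all_boot all_order all_algebra all_field.
Set Implicit Arguments. Unset Strict Implicit. Unset Printing Implicit Defensive.
Import GRing.Theory Num.Theory.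
Local Open Scope ring_scope.

Definition sqdist (F : finFieldType) (d : nat) (x y : 'rV[F]_d) : F :=
  \sum_(i < d) (x ord0 i - y ord0 i) ^+ 2.

Definition eta (F : finFieldType) (a : F) : int :=
  if a == 0 then 0 else if [exists b : F, b ^+ 2 == a] then 1 else -1.

Definition SQ (F : finFieldType) (d : nat) (A : {set 'rV[F]_d}) : nat :=
  #|[set p in setX A A | eta (sqdist p.1 p.2) == 1]|.

(* Main.v *)
Require Import Defs.
From mathcomp Require Import all_boot all_order all_algebra all_field.
From mathcomp Require Import all_fingroup all_solvable all_character.
From mathcomp Require Import ring.
Set Implicit Arguments. Unset Strict Implicit. Unset Printing Implicit Defensive.
Import Order.TTheory GRing.Theory Num.Theory.
Local Open Scope ring_scope.


Section Quad.
Variable F : finFieldType.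

Lemma eta0 : eta (0 : F) = 0.
Proof. by rewrite /eta eqxx. Qed.

Lemma etaE (a : F) : a != 0 ->
  eta a = if [exists b : F, b ^+ 2 == a] then 1 else -1.
Proof. by rewrite /eta => /negPf ->. Qed.

Lemma eta_cases (a : F) : [\/ a = 0 /\ eta a = 0,
   a != 0 /\ eta a = 1 /\ (exists b, b ^+ 2 = a) |
   a != 0 /\ eta a = -1 /\ (forall b, b ^+ 2 != a)].
Proof.
have [->|a0] := eqVneq a 0; first by constructor 1; rewrite eta0.
rewrite etaE //; case: existsP => [[b /eqP hb]|hn].
  by constructor 2; split => //; split => //; exists b.
constructor 3; split => //; split => // b; apply/negP => hb; apply: hn; by exists b.
Qed.

Lemma eta_sqr (c b : F) : c != 0 -> eta (c ^+ 2 * b) = eta b.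
Proof.
move=> c0.
have [->|b0] := eqVneq b 0; first by rewrite mulr0.
have cb0 : c ^+ 2 * b != 0 by rewrite mulf_neq0 // expf_neq0.
rewrite !etaE //.
have -> : [exists e, e ^+ 2 == c ^+ 2 * b] = [exists e, e ^+ 2 == b] => //.
apply/existsP/existsP => [[e /eqP he]|[e /eqP he]].
  by exists (e / c); rewrite expr_div_n he mulrC mulKf // expf_neq0.
by exists (c * e); rewrite exprMn he.
Qed.

Lemma eta_sq (c : F) : c != 0 -> eta (c ^+ 2) = 1.
Proof.
move=> c0; rewrite -[c ^+ 2]mulr1 eta_sqr // etaE ?oner_neq0 //.
by case: existsP => // -[]; exists 1; rewrite expr1n.
Qed.

Hypothesis oF : odd #|F|.

Lemma two_neq0 : (2%:R : F) != 0.
Proof.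
apply/negP => /eqP h2.
have ch : (2 \in [pchar F])%N by rewrite inE h2 eqxx.
have o2 := @order_pprimeChar 2 F ch 1 (oner_neq0 _).
have := order_dvdG (in_setT (1 : pPrimeCharType ch)).
by rewrite o2 cardsT => /dvdn_odd; move/(_ oF).
Qed.

Lemma card_roots (u : F) : (#|[set v : F | v ^+ 2 == u]|)%:Z = 1 + eta u.
Proof.
case: (eta_cases u) => [[-> ->]|[u0 [-> [b hb]]]|[u0 [-> hn]]].
- have -> : [set v : F | v ^+ 2 == 0] = [set 0].
    by apply/setP => v; rewrite !inE expf_eq0.
  by rewrite cards1.
- have b0 : b != 0 by apply: contraNneq u0 => b0; rewrite -hb b0 expr0n.
  have -> : [set v : F | v ^+ 2 == u] = [set b; -b].
    apply/setP => v; rewrite !inE -hb -subr_eq0 subr_sqr mulf_eq0 subr_eq0.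
    by rewrite addr_eq0.
  rewrite cards2.
  have -> : b != - b.
    have : b *+ 2 != 0 by rewrite -mulr_natr mulf_neq0 // two_neq0.
    by apply: contraNneq => hb2; rewrite mulr2n {1}hb2 addNr.
  by [].
- have -> : [set v : F | v ^+ 2 == u] = set0.
    by apply/setP => v; rewrite !inE (negPf (hn v)).
  by rewrite cards0.
Qed.

Lemma sum_eta : \sum_(u : F) eta u = 0.
Proof.
have h : (\sum_(u : F) #|[set v : F | v ^+ 2 == u]|)%N = #|F|.
  transitivity (\sum_(u : F) \sum_(v : F | v ^+ 2 == u) 1)%N.
    by apply: eq_bigr => u _; rewrite -sum1_card; apply: eq_bigl => v; rewrite inE.
  rewrite -sum1_card [RHS](@partition_big _ _ _ _ _ _ _ (fun v : F => v ^+ 2) predT) //=.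
have : \sum_(u : F) (1 + eta u) = #|F|%:R :> int.
  by rewrite -h natr_sum; apply: eq_bigr => u _; rewrite natz card_roots.
rewrite big_split /= sumr_const -[_ *+ _]mulr_natr mul1r.
by move/eqP; rewrite -subr_eq0 [X in X - _]addrC addrK => /eqP.
Qed.

Lemma sum_ind (T : finType) (R : pzRingType) (P : pred T) :
  \sum_(u : T) (P u)%:R = #|[set u | P u]|%:R :> R.
Proof.
rewrite -sum1_card natr_sum [RHS]big_mkcond /=; apply: eq_bigr => u _.
by rewrite inE; case: (P u).
Qed.

Lemma card_S_NS : #|[set x : F | eta x == 1]| = #|[set x : F | eta x == -1]|.
Proof.
have h : forall u : F, eta u = (eta u == 1)%:R - (eta u == -1)%:R.
  by move=> u; case: (eta_cases u) => [[_ ->]|[_ [-> _]]|[_ [-> _]]].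
have := sum_eta; rewrite (eq_bigr _ (fun u _ => h u)) sumrB !sum_ind.
by move/eqP; rewrite subr_eq0 !natz eqz_nat => /eqP.
Qed.

Lemma eta_nsq_mul_sq (a c : F) : c != 0 -> eta (a * c ^+ 2) = eta a.
Proof. by move=> c0; rewrite mulrC eta_sqr. Qed.

Lemma eta_mul (a b : F) : eta (a * b) = eta a * eta b.
Proof.
case: (eta_cases a) => [[-> ->]|[a0 [-> [c hc]]]|[a0 [ea hna]]].
- by rewrite mul0r eta0 mul0r.
- have c0 : c != 0 by apply: contraNneq a0 => c0; rewrite -hc c0 expr0n.
  by rewrite -hc eta_sqr // mul1r.
case: (eta_cases b) => [[-> ->]|[b0 [-> [c hc]]]|[b0 [eb hnb]]].
- by rewrite mulr0 eta0 mulr0.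
- have c0 : c != 0 by apply: contraNneq b0 => c0; rewrite -hc c0 expr0n.
  by rewrite -hc eta_nsq_mul_sq // mulr1.
rewrite ea eb mulrNN mulr1.
have ab0 : a * b != 0 by rewrite mulf_neq0.
case: (eta_cases (a * b)) => [[/eqP]|[_ [-> _]]|[_ [eab _]]]; rewrite ?(negPf ab0) //.
pose S := [set x : F | eta x == 1]; pose NS := [set x : F | eta x == -1].
have sub : [set a * x | x in S] \subset NS.
  apply/subsetP => y /imsetP [x]; rewrite inE => /eqP ex ->.
  case: (eta_cases x) => [[_ e0]|[x0 [_ [c hc]]]|[_ [e1 _]]]; rewrite ?e0 ?e1 // in ex.
  have c0 : c != 0 by apply: contraNneq x0 => c0; rewrite -hc c0 expr0n.
  by rewrite inE -hc eta_nsq_mul_sq // ea.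
have cardim : #|[set a * x | x in S]| = #|S| by apply: card_imset; apply: mulfI.
have eqS : [set a * x | x in S] = NS.
  apply/eqP; rewrite eqEcard sub cardim /S /NS card_S_NS leqnn. done.
have : a * b \in NS by rewrite inE eab.
rewrite -eqS => /imsetP [x]; rewrite inE => /eqP ex /(mulfI a0) hbx.
by move: eb; rewrite hbx ex => /eqP.
Qed.
End Quad.


Section Fourier.
Variable F : finFieldType.
Hypothesis oF : odd #|F|.
Variable psi : F -> algC.
Hypothesis psiD : forall x y, psi (x + y) = psi x * psi y.
Hypothesis psi0 : psi 0 = 1.
Hypothesis psi_nt : exists x, psi x != 1.
Hypothesis psiN : forall x, psi (- x) = (psi x)^*.

Definition et (a : F) : algC := (eta a)%:~R.

Lemma et0 : et 0 = 0. Proof. by rewrite /et eta0. Qed.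
Lemma et_mul a b : et (a * b) = et a * et b.
Proof. by rewrite /et eta_mul // intrM. Qed.
Lemma et_conj a : (et a)^* = et a.
Proof. by rewrite /et rmorph_int. Qed.
Lemma et_sq c : c != 0 -> et (c ^+ 2) = 1.
Proof. by move=> c0; rewrite /et eta_sq. Qed.
Lemma et_sqr a : a != 0 -> et a * et a = 1.
Proof.
move=> a0; rewrite -et_mul -expr2 /et.
by rewrite eta_sq.
Qed.
Lemma et_cube a : et a * (et a * et a) = et a.
Proof.
by have [->|a0] := eqVneq a 0; [rewrite et0 mul0r | rewrite et_sqr // mulr1].
Qed.
Lemma et_inv a : et a^-1 = et a.
Proof.
have [->|a0] := eqVneq a 0; first by rewrite invr0.
have -> : a^-1 = a * (a^-1) ^+ 2 by rewrite expr2 mulrA divff // mul1r.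
by rewrite et_mul et_sq ?mulr1 // invr_eq0.
Qed.
Lemma sum_et : \sum_(u : F) et u = 0.
Proof. by rewrite /et -(big_morph (fun z : int => z%:~R : algC) (@intrD _) (mulr0z 1)) sum_eta. Qed.

Lemma psi_sum (I : Type) (r : seq I) (P : pred I) (f : I -> F) :
  psi (\sum_(i <- r | P i) f i) = \prod_(i <- r | P i) psi (f i).
Proof. exact: (big_morph psi psiD psi0). Qed.

Lemma psiB x y : psi (x - y) = psi x * (psi y)^*.
Proof. by rewrite psiD psiN. Qed.

Lemma psi_conj_mul x : psi x * (psi x)^* = 1.
Proof. by rewrite -psiN -psiD subrr psi0. Qed.

Lemma sum_shift (f : F -> algC) c : \sum_x f x = \sum_x f (x + c).
Proof. by rewrite (reindex_inj (addIr c)). Qed.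

Lemma sum_psi a : \sum_(x : F) psi (a * x) = (a == 0)%:R * #|F|%:R.
Proof.
have [->|a0] := eqVneq a 0.
  by rewrite mul1r (eq_bigr (fun _ => 1)) ?sumr_const // => x _; rewrite mul0r psi0.
case: psi_nt => x0 hx0; rewrite mul0r.
set S := \sum_x _.
have : S = S * psi x0.
  rewrite {1}/S (sum_shift _ (x0 / a)) /S mulr_suml; apply: eq_bigr => x _.
  by rewrite mulrDr mulrCA divff // mulr1 psiD.
move/eqP; rewrite -subr_eq0 -{1}[S]mulr1 -mulrBr mulf_eq0 subr_eq0 eq_sym.
by rewrite eq_sym (eq_sym 1) (negPf hx0) orbF => /eqP.
Qed.

Definition G := \sum_(s : F) et s * psi s.

Lemma etG t : et t * G = \sum_(s : F) et s * psi (s * t).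
Proof.
have [->|t0] := eqVneq t 0.
  rewrite et0 mul0r (eq_bigr (fun s => et s)) ?sum_et // => s _.
  by rewrite mulr0 psi0 mulr1.
rewrite (reindex_inj (mulIf (invr_neq0 t0))) /= /G mulr_sumr.
apply: eq_bigr => s _; rewrite divfK // et_mul et_inv.
by rewrite !mulrA [et t * et s]mulrC.
Qed.

Lemma Gconj_sum : G^* = \sum_(t : F) et t * psi (- t).
Proof.
rewrite /G rmorph_sum; apply: eq_bigr => t _.
by rewrite rmorphM /= et_conj psiN.
Qed.

Lemma Gconj : G^* = et (-1) * G.
Proof.
rewrite Gconj_sum etG; apply: eq_bigr => t _.
by rewrite mulrN1.
Qed.

Lemma GGc : G * G^* = #|F|%:R.
Proof.
rewrite Gconj_sum mulr_sumr.
transitivity (\sum_(t : F) \sum_(s : F) et s * psi ((s - 1) * t)).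
  apply: eq_bigr => t _; rewrite mulrA [G * _]mulrC etG mulr_suml; apply: eq_bigr => s _.
  by rewrite -mulrA -psiD mulrBl mul1r.
rewrite exchange_big /=.
transitivity (\sum_(s : F) et s * ((s - 1 == 0)%:R * #|F|%:R)).
  by apply: eq_bigr => s _; rewrite -mulr_sumr sum_psi.
rewrite (bigD1 1) //= subrr eqxx mul1r big1 ?addr0.
  by rewrite /et -[1 : F](expr1n _ 2) eta_sq ?oner_neq0 // mul1r.
move=> s hs; rewrite subr_eq0 (negPf hs) mul0r mulr0 //.
Qed.

Lemma etN1_sqr : et (-1) * et (-1) = 1.
Proof. by rewrite et_sqr // oppr_eq0 oner_neq0. Qed.

Lemma G2 : G ^+ 2 = et (-1) * #|F|%:R.
Proof.
have hG : G = et (-1) * G^* by rewrite Gconj mulrA etN1_sqr mul1r.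
by rewrite expr2 {1}hG -mulrA [G^* * G]mulrC GGc.
Qed.

Lemma G_neq0 : G != 0.
Proof.
apply/negP => /eqP h0.
have : G ^+ 2 = 0 by rewrite h0 expr0n.
rewrite G2 => /eqP; rewrite mulf_eq0 pnatr_eq0 => /orP [/eqP h|].
  by move: etN1_sqr; rewrite h mul0r => /eqP; rewrite eq_sym oner_eq0.
have q0 : #|F| != 0%N by rewrite -lt0n; apply/card_gt0P; exists 0.
by rewrite (negPf q0).
Qed.

Lemma card_roots_C (u : F) : (#|[set v : F | v ^+ 2 == u]|)%:R = 1 + et u :> algC.
Proof.
have := congr1 (fun z : int => z%:~R : algC) (card_roots oF u).
by rewrite /= intrD /et => h; exact: h.
Qed.

Lemma sum_sq (f : F -> algC) : \sum_(v : F) f (v ^+ 2) = \sum_(u : F) (1 + et u) * f u.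
Proof.
rewrite (@partition_big _ _ _ _ _ _ _ (fun v : F => v ^+ 2) predT) //=.
apply: eq_bigr => u _; rewrite -card_roots_C.
transitivity (\sum_(v : F | v ^+ 2 == u) f u).
  by apply: eq_bigr => v /eqP ->.
rewrite sumr_const [RHS]mulrC mulr_natr; congr (_ *+ _).
by apply: eq_card => v; rewrite inE.
Qed.

Lemma gauss0 s : s != 0 -> \sum_(v : F) psi (s * v ^+ 2) = et s * G.
Proof.
move=> s0; rewrite (sum_sq (fun u => psi (s * u))).
rewrite (eq_bigr (fun u => psi (s * u) + et u * psi (u * s))); last first.
  by move=> u _; rewrite mulrDl mul1r mulrC.
by rewrite big_split /= sum_psi (negPf s0) mul0r add0r etG.
Qed.

Lemma gauss1 s b : s != 0 ->
  \sum_(v : F) psi (s * v ^+ 2 + b * v) = psi (- (b ^+ 2 / (4%:R * s))) * (et s * G).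
Proof.
move=> s0; have t0 := two_neq0 oF.
rewrite (sum_shift _ (- (b / (2%:R * s)))).
transitivity (\sum_(v : F) psi (- (b ^+ 2 / (4%:R * s))) * psi (s * v ^+ 2)).
  apply: eq_bigr => v _; rewrite -psiD; congr psi.
  have f0 : (4%:R : F) != 0.
    by rewrite -[4%N]/(2 * 2)%N natrM mulf_neq0.
  by field; rewrite s0 f0 t0.
by rewrite -big_distrr /= gauss0.
Qed.

Variable d : nat.
Local Notation V := 'rV[F]_d.

Definition nrm (w : V) : F := \sum_i w 0 i ^+ 2.
Definition dot (m w : V) : F := \sum_i m 0 i * w 0 i.

Lemma prodsum (f : 'I_d -> F -> algC) :
  \sum_(w : V) \prod_i f i (w 0 i) = \prod_i \sum_(x : F) f i x.
Proof.
rewrite bigA_distr_bigA /=.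
rewrite (reindex (fun g : {ffun 'I_d -> F} => \row_i g i)) /=; last first.
  apply: onW_bij; exists (fun w : V => [ffun i => w 0 i]).
    by move=> g; apply/ffunP => i; rewrite ffunE mxE.
  by move=> w; apply/rowP => i; rewrite mxE ffunE.
by apply: eq_bigr => g _; apply: eq_bigr => i _; rewrite mxE.
Qed.

Lemma orth (v : V) : \sum_(m : V) psi (dot m v) = (v == 0)%:R * (#|F| ^ d)%:R.
Proof.
transitivity (\prod_(i < d) \sum_(x : F) psi (x * v 0 i)).
  by rewrite -prodsum; apply: eq_bigr => m _; rewrite /dot psi_sum.
transitivity (\prod_(i < d) ((v 0 i == 0)%:R * #|F|%:R : algC)).
  apply: eq_bigr => i _; rewrite -sum_psi; apply: eq_bigr => x _.
  by rewrite mulrC.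
have [->|v0] := eqVneq v 0.
  rewrite (eq_bigr (fun _ => #|F|%:R)); last by move=> i _; rewrite mxE eqxx mul1r.
  by rewrite prodr_const card_ord mul1r natrX.
case: (pickP (fun i => v 0 i != 0)) => [i hi|h]; last first.
  by case/eqP: v0; apply/rowP => i; move: (h i); rewrite mxE => /negbFE /eqP.
by rewrite (bigD1 i) //= (negPf hi) !mul0r.
Qed.

Hypothesis hd : ~~ odd d.

Definition lam (m : V) : algC := \sum_(w : V) et (nrm w) * psi (dot m w).

Lemma et_pow_even s : et s * et s ^+ d = et s.
Proof.
have [->|s0] := eqVneq s 0; first by rewrite et0 mul0r.
rewrite -(odd_double_half d) (negPf hd) add0n -mul2n exprM expr2 et_sqr //.
by rewrite expr1n mulr1.
Qed.

Lemma inner s (m : V) : s != 0 ->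
  \sum_(w : V) psi (s * nrm w + dot m w) =
  psi (- (nrm m / (4%:R * s))) * (et s * G) ^+ d.
Proof.
move=> s0.
transitivity (\sum_(w : V) \prod_i psi (s * w 0 i ^+ 2 + m 0 i * w 0 i)).
  by apply: eq_bigr => w _; rewrite -psi_sum big_split /= /nrm /dot mulr_sumr.
rewrite (prodsum (fun i x => psi (s * x ^+ 2 + m 0 i * x))).
rewrite (eq_bigr (fun i => psi (- (m 0 i ^+ 2 / (4%:R * s))) * (et s * G))); last first.
  by move=> i _; rewrite gauss1.
rewrite big_split /= prodr_const card_ord -psi_sum sumrN -mulr_suml.
by [].
Qed.

Lemma lamG m : lam m * G = G ^+ d * (et (- (nrm m / 4%:R)) * G).
Proof.
rewrite /lam mulr_suml.
transitivity (\sum_(w : V) \sum_(s : F) et s * psi (s * nrm w + dot m w)).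
  apply: eq_bigr => w _; rewrite mulrAC etG mulr_suml; apply: eq_bigr => s _.
  by rewrite -mulrA -psiD.
rewrite exchange_big /=.
transitivity (\sum_(s : F) G ^+ d * (et s * psi (- (nrm m / (4%:R * s))))).
  apply: eq_bigr => s _; rewrite -mulr_sumr.
  have [->|s0] := eqVneq s 0; first by rewrite et0 !mul0r mulr0.
  rewrite inner // exprMn.
  have E := et_pow_even s.
  rewrite -[et s in RHS]E.
  ring.
rewrite -mulr_sumr etG; congr (_ * _).
rewrite (reindex_inj (inv_inj (@invrK F))) /=; apply: eq_bigr => s _.
rewrite et_inv invfM invrK; congr (_ * psi _).
ring.
Qed.

Lemma lamE m : lam m = G ^+ d * et (- (nrm m / 4%:R)).
Proof. by apply: (mulIf G_neq0); rewrite lamG mulrA. Qed.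

Lemma nrm0 : nrm 0 = 0.
Proof. by rewrite /nrm big1 // => i _; rewrite mxE expr0n. Qed.

Lemma lam0 : lam 0 = 0.
Proof. by rewrite lamE nrm0 mul0r oppr0 et0 mulr0. Qed.

Lemma eta_norm (x : F) : `|eta x| <= 1.
Proof. by case: (eta_cases x) => [[_ ->]|[_ [-> _]]|[_ [-> _]]]. Qed.

Lemma lam_le m : lam m <= (#|F| ^ d./2)%:R.
Proof.
set k := d./2.
have dk : d = (2 * k)%N by rewrite mul2n /k -{1}(odd_double_half d) (negPf hd) add0n.
pose e : int := eta (-1 : F) ^+ k * eta (- (nrm m / 4%:R)).
have -> : lam m = e%:~R * (#|F| ^ k)%:R.
  rewrite lamE dk exprM G2 exprMn /e intrM rmorphXn /et natrX.
  by rewrite mulrAC.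
have e1 : e <= 1.
  apply: le_trans (ler_norm e) _.
  rewrite /e normrM normrX.
  have h1 := eta_norm (-1); have h2 := eta_norm (- (nrm m / 4%:R)).
  have h3 : `|eta (-1 : F)| ^+ k <= 1 by apply: exprn_ile1.
  by have := ler_pM (exprn_ge0 k (normr_ge0 _)) (normr_ge0 _) h3 h2; rewrite mulr1.
have : (e%:~R : algC) <= 1 by rewrite -[1 : algC]/(1%:~R) ler_int.
move=> h; rewrite -[X in _ <= X]mul1r; apply: ler_wpM2r => //.
Qed.

Lemma dotB m w u : dot m (w - u) = dot m w - dot m u.
Proof. by rewrite /dot -sumrB; apply: eq_bigr => i _; rewrite !mxE mulrBr. Qed.

Lemma dot0l w : dot 0 w = 0.
Proof. by rewrite /dot big1 // => i _; rewrite mxE mul0r. Qed.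

Lemma invFour u : (#|F| ^ d)%:R * et (nrm u) = \sum_(m : V) lam m * (psi (dot m u))^*.
Proof.
rewrite /lam.
transitivity (\sum_(w : V) et (nrm w) * \sum_(m : V) psi (dot m (w - u))).
  rewrite [RHS](bigD1 u) //= [X in _ + X]big1 ?addr0.
    by rewrite subrr orth eqxx mul1r mulrC.
  move=> w hw; rewrite orth subr_eq0 (negPf hw) mul0r mulr0 //.
rewrite (eq_bigr (fun w => \sum_(m : V) et (nrm w) * psi (dot m w) * (psi (dot m u))^*)).
  by rewrite exchange_big /=; apply: eq_bigr => m _; rewrite mulr_suml.
by move=> w _; rewrite mulr_sumr; apply: eq_bigr => m _; rewrite dotB psiB mulrA.
Qed.

Lemma E_bound (A : {set V}) :
  (#|F| ^ d)%:R * (\sum_(x in A) \sum_(y in A) et (nrm (x - y))) <=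
  (#|F| ^ d./2)%:R * ((#|F| ^ d)%:R * #|A|%:R - #|A|%:R ^+ 2).
Proof.
set N : algC := (#|F| ^ d)%:R; set Q : algC := (#|F| ^ d./2)%:R.
set a : algC := #|A|%:R.
pose Ah m := \sum_(y in A) psi (dot m y).
pose n m := (Ah m)^* * Ah m.
have step1 : N * (\sum_(x in A) \sum_(y in A) et (nrm (x - y))) = \sum_(m : V) lam m * n m.
  rewrite mulr_sumr.
  transitivity (\sum_(x in A) \sum_(y in A) \sum_(m : V) lam m * ((psi (dot m x))^* * psi (dot m y))).
    apply: eq_bigr => x _; rewrite mulr_sumr; apply: eq_bigr => y _.
    rewrite invFour; apply: eq_bigr => m _; rewrite dotB psiB rmorphM /= conjCK.
    by [].
  transitivity (\sum_(x in A) \sum_(m : V) \sum_(y in A) lam m * ((psi (dot m x))^* * psi (dot m y))).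
    by apply: eq_bigr => x _; rewrite exchange_big.
  rewrite exchange_big /=; apply: eq_bigr => m _.
  rewrite /n /Ah; move: (lam m) => L.
  rewrite rmorph_sum /= mulr_suml mulr_sumr; apply: eq_bigr => x _.
  rewrite mulr_sumr mulr_sumr; apply: eq_bigr => y _; by [].
have parse : \sum_(m : V) n m = N * a.
  transitivity (\sum_(x in A) \sum_(y in A) \sum_(m : V) psi (dot m (y - x))).
    rewrite /n /Ah.
    transitivity (\sum_(m : V) \sum_(x in A) \sum_(y in A) (psi (dot m x))^* * psi (dot m y)).
      apply: eq_bigr => m _; rewrite rmorph_sum /= mulr_suml; apply: eq_bigr => x _.
      by rewrite mulr_sumr.
    rewrite exchange_big /=; apply: eq_bigr => x _; rewrite exchange_big /=.
    apply: eq_bigr => y _; apply: eq_bigr => m _.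
    by rewrite dotB psiB mulrC.
  rewrite /a -sumr_const mulr_sumr; apply: eq_bigr => x xA.
  rewrite (bigD1 x) //= subrr orth eqxx mul1r big1 ?addr0 ?mulr1 //.
  by move=> y /andP [_ hy]; rewrite orth subr_eq0 (negPf hy) mul0r.
have n_ge0 m : 0 <= n m by rewrite /n mulrC -normCK exprn_ge0.
have n0 : n 0 = a ^+ 2.
  rewrite /n /Ah (eq_bigr (fun _ => 1)); last by move=> y _; rewrite dot0l psi0.
  by rewrite sumr_const -/a rmorphMn rmorph1 expr2.
rewrite step1 (bigD1 0) //= lam0 mul0r add0r.
have : \sum_(m | m != 0) n m = N * a - a ^+ 2.
  by rewrite -parse [X in _ = X - _](bigD1 0) //= n0 addrC addrK.
move=> <-; rewrite mulr_sumr; apply: ler_sum => m _.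
by apply: ler_wpM2r => //; apply: lam_le.
Qed.
End Fourier.


Lemma SQ_sum (F : finFieldType) d (A : {set 'rV[F]_d}) :
  (SQ A)%:R = \sum_(x in A) \sum_(y in A) ((eta (nrm (x - y)) == 1)%:R : algC).
Proof.
rewrite pair_big /= big_mkcond /= /SQ -sum_ind; apply: eq_bigr => p _.
have -> : nrm (p.1 - p.2) = sqdist p.1 p.2.
  by rewrite /nrm /sqdist; apply: eq_bigr => i _; rewrite !mxE.
case: p => x y /=; rewrite !inE /=; by case: ((x \in A) && (y \in A)).
Qed.

Lemma two_ind (F : finFieldType) (t : F) :
  2%:R * ((eta t == 1)%:R : algC) = et t ^+ 2 + et t.
Proof.
by rewrite /et; case: (eta_cases t) => [[_ ->]|[_ [-> _]]|[_ [-> _]]];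
  rewrite /= ?mulr0 ?mulr1 ?expr0n ?addr0 //= ?expr1n // sqrrN expr1n addrN.
Qed.

Lemma et_sq_le1 (F : finFieldType) (t : F) : et t ^+ 2 <= 1.
Proof.
by rewrite /et; case: (eta_cases t) => [[_ ->]|[_ [-> _]]|[_ [-> _]]];
  rewrite ?expr0n ?sqrrN ?expr1n.
Qed.

Lemma diag_bound (F : finFieldType) d (A : {set 'rV[F]_d}) :
  \sum_(x in A) \sum_(y in A) et (nrm (x - y)) ^+ 2 <= #|A|%:R * (#|A|%:R - 1) :> algC.
Proof.
have h : forall x, x \in A -> \sum_(y in A) et (nrm (x - y)) ^+ 2 <= (#|A|%:R - 1 : algC).
  move=> x xA.
  rewrite (bigD1 x) //= subrr nrm0 et0 expr0n add0r.
  have -> : (#|A|%:R - 1 : algC) = \sum_(y in A | y != x) 1.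
    have : \sum_(y in A) (1 : algC) = #|A|%:R by rewrite sumr_const.
    by rewrite (bigD1 x) //= => <-; rewrite addrC addrK.
  by apply: ler_sum => y _; apply: et_sq_le1.
apply: le_trans (ler_sum _ h) _.
by rewrite sumr_const mulr_natl.
Qed.

Lemma exists_psi (F : finFieldType) : exists psi : F -> algC,
  [/\ forall x y, psi (x + y) = psi x * psi y, psi 0 = 1,
      (exists x, psi x != 1) & forall x, psi (- x) = (psi x)^*].
Proof.
pose G := [set: F]%G.
have abG : abelian G by apply: FinRing.zmod_abelian.
have : (1 < #|Iirr G|)%N.
  rewrite card_Iirr_abelian // cardsT.
  by apply/card_gt1P; exists 0, 1; rewrite !inE eq_sym oner_eq0.
case/card_gt1P => i [j [_ _ nij]].
have [k nk0] : exists k : Iirr G, k != 0.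
  by case: (eqVneq i 0) => [i0|]; [exists j; rewrite -i0 eq_sym | exists i].
have lin : 'chi_k \is a linear_char by apply/char_abelianP.
exists (fun x => 'chi_k x); split.
- by move=> x y; rewrite -FinRing.zmodMgE lin_charM ?inE.
- by rewrite -FinRing.zmod1gE lin_char1.
- apply/existsP; apply: contraR nk0; rewrite negb_exists => /forallP H.
  rewrite -irr_eq1; apply/eqP/cfunP => x; rewrite cfun1E inE.
  by move: (H x); rewrite negbK => /eqP.
- by move=> x; rewrite -FinRing.zmodVgE lin_charV_conj ?inE.
Qed.

Theorem lemma6p1 (F : finFieldType) (d : nat) (A : {set 'rV[F]_d})
  (hq : odd #|F|) (hd2 : (2 <= d)%N) (hdeven : ~~ odd d) :
  let q2 : rat := (#|F| ^ (d %/ 2))%:R in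
  let a : rat := #|A|%:R in
  (SQ A)%:R <= a ^+ 2 / 2 + q2 / 2 * a - a ^+ 2 / (2 * q2) - a / 2.
Proof.
cbv zeta.
have [psi [psiD psi0 psi_nt psiN]] := exists_psi F.
set k := d./2.
have dk : d = (2 * k)%N by rewrite mul2n /k -{1}(odd_double_half d) (negPf hdeven) add0n.
have Eb := E_bound hq psiD psi0 psi_nt psiN hdeven A.
set E := \sum_(x in A) \sum_(y in A) et (nrm (x - y)) in Eb.
have Sb : 2%:R * (SQ A)%:R = \sum_(x in A) \sum_(y in A) et (nrm (x - y)) ^+ 2 + E :> algC.
  rewrite SQ_sum mulr_sumr /E -big_split /=; apply: eq_bigr => x _.
  rewrite mulr_sumr -big_split /=; apply: eq_bigr => y _.
  by rewrite two_ind.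
have Db := diag_bound A.
have q0 : (0 < #|F|)%N by apply/card_gt0P; exists 0.
set Q : algC := (#|F| ^ k)%:R.
set aa : algC := #|A|%:R.
set S : algC := (SQ A)%:R.
have hN : ((#|F| ^ d)%:R : algC) = Q ^+ 2 by rewrite dk mulnC expnM natrX.
rewrite hN in Eb.
have Q0 : 0 < Q by rewrite ltr0n expn_gt0 q0.
have keyC : 2%:R * Q * S + Q * aa + aa * aa <= Q * (aa * aa) + Q * Q * aa.
  have h3 : Q * E <= Q ^+ 2 * aa - aa ^+ 2.
    by rewrite -(ler_pM2l Q0) mulrA -expr2.
  have h1 : 0 <= aa * (aa - 1) + E - 2%:R * S.
    by rewrite subr_ge0 Sb lerD2r.
  have h2 : 0 <= Q ^+ 2 * aa - aa ^+ 2 - Q * E by rewrite subr_ge0.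
  rewrite -subr_ge0.
  have -> : Q * (aa * aa) + Q * Q * aa - (2%:R * Q * S + Q * aa + aa * aa) =
            Q * (aa * (aa - 1) + E - 2%:R * S) + (Q ^+ 2 * aa - aa ^+ 2 - Q * E).
    ring.
  by apply: addr_ge0 => //; apply: mulr_ge0 => //; apply: ltW.
have key : (2 * #|F| ^ k * SQ A + #|F| ^ k * #|A| + #|A| * #|A| <=
            #|F| ^ k * (#|A| * #|A|) + #|F| ^ k * #|F| ^ k * #|A|)%N.
  by rewrite -(ler_nat algC) !natrD !natrM.
rewrite divn2 -/k.
have keyR := key; rewrite -(ler_nat rat) !natrD !natrM in keyR.
move: keyR.
set Qr : rat := (#|F| ^ k)%:R; set ar : rat := #|A|%:R; set Sr : rat := (SQ A)%:R.
move=> keyR.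
have Qr0 : 0 < Qr by rewrite ltr0n expn_gt0 q0.
have -> : ar ^+ 2 / 2 + Qr / 2 * ar - ar ^+ 2 / (2 * Qr) - ar / 2 =
          Sr + (Qr * (ar * ar) + Qr * Qr * ar - (2%:R * Qr * Sr + Qr * ar + ar * ar)) / (2%:R * Qr).
  by field; rewrite (gt_eqF Qr0).
rewrite lerDl divr_ge0 ?subr_ge0 //.
by rewrite mulr_ge0 // ltW.
Qed.
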